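(* Let $\mathbf G$ be a power-associative loop such that $\lvert\mathrm{Cen}(\mathcal G(\mathbf G))\rvert>1$. Then: (a) either $\mathbf G\cong(\mathbb Z,+)$, or all elements of $\mathbf G$ have finite order; (b) $\mathbf G\cong(\mathbb Z,+)$ if and only if $G$ is the union of countably infinitely many $\equiv_{\mathbf G}$-classes of cardinality $2$ and exactly one $\equiv_{\mathbf G}$-class of cardinality $3$.
   Context: A loop is called power-associative if every subloop generated by one element is a group; for such a loop, $x^n$ ($n\in\mathbb Z$) and the order $o(x)$ are defined within the cyclic group $\langle x\rangle$, and $e_{\mathbf G}$ denotes the identity. The power graph $\mathcal G(\mathbf G)$ is the simple graph with vertex set $G$ in which distinct $x,y$ are adjacent if $y=x^n$ or $x=y^n$ for some $n\in\mathbb Z$. The center of the power graph is $\mathrm{Cen}(\mathcal G(\mathbf G))=\{x\in G\mid x\text{ is adjacent to every }y\in G\setminus\{x\}\}$. For vertices $x,y$, write $x\equiv_{\mathbf G}y$ if $x$ and $y$ have the same closed neighborhood in $\mathcal G(\mathbf G)$. *)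

(* Defs.v *)
From Stdlib Require Import ZArith.

Section LoopDefs.
Variable G : Type.
Variable mul : G -> G -> G.
Variable e : G.

Definition is_loop : Prop :=
  (forall a, mul e a = a /\ mul a e = a) /\
  (forall a b, exists x, mul a x = b /\ forall x', mul a x' = b -> x' = x) /\
  (forall a b, exists y, mul y a = b /\ forall y', mul y' a = b -> y' = y).

Definition is_subloop (S : G -> Prop) : Prop :=
  S e /\
  (forall a b, S a -> S b -> S (mul a b)) /\
  (forall a b x, S a -> S b -> mul a x = b -> S x) /\
  (forall a b y, S a -> S b -> mul y a = b -> S y).

Definition gen1 (x y : G) : Prop :=
  forall S, is_subloop S -> S x -> S y.

(* Power-associative: each one-generated subloop is a group, i.e. the
   (restricted) loop multiplication is associative on it. *)
Definition power_assoc : Prop :=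
  forall x a b c, gen1 x a -> gen1 x b -> gen1 x c ->
    mul (mul a b) c = mul a (mul b c).

Fixpoint npow (x : G) (n : nat) : G :=
  match n with
  | O => e
  | S n' => mul (npow x n') x
  end.

(* Integer powers, as a relation: zpow_rel x n y <-> y = x^n.
   For n < 0, x^n is the inverse of x^(-n) (in the group <x>), i.e. the
   unique y with y * x^(-n) = e. *)
Definition zpow_rel (x : G) (n : Z) (y : G) : Prop :=
  match n with
  | Z0 => y = e
  | Zpos p => y = npow x (Pos.to_nat p)
  | Zneg p => mul y (npow x (Pos.to_nat p)) = e
  end.

Definition is_power (x y : G) : Prop := exists n : Z, zpow_rel x n y.

Definition pg_adj (x y : G) : Prop :=
  x <> y /\ (is_power x y \/ is_power y x).

Definition in_center (x : G) : Prop :=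
  forall y, y <> x -> pg_adj x y.

Definition closed_nbhd (x z : G) : Prop := z = x \/ pg_adj x z.

Definition same_nbhd (x y : G) : Prop :=
  forall z, closed_nbhd x z <-> closed_nbhd y z.

Definition finite_order (x : G) : Prop :=
  exists n : nat, (0 < n)%nat /\ npow x n = e.

Definition iso_Z : Prop :=
  exists f : G -> Z,
    (forall a b, f a = f b -> a = b) /\
    (forall z, exists a, f a = z) /\
    (forall a b, f (mul a b) = (f a + f b)%Z).

Definition card2 (P : G -> Prop) : Prop :=
  exists a b, a <> b /\ forall y, P y <-> (y = a \/ y = b).

Definition card3 (P : G -> Prop) : Prop :=
  exists a b c, a <> b /\ a <> c /\ b <> c /\
    forall y, P y <-> (y = a \/ y = b \/ y = c).

Definition class_structure : Prop :=
  (exists c, card3 (same_nbhd c) /\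
     forall d, card3 (same_nbhd d) -> same_nbhd c d) /\
  (forall x, card2 (same_nbhd x) \/ card3 (same_nbhd x)) /\
  (exists h : nat -> G,
     (forall n, card2 (same_nbhd (h n))) /\
     (forall n m, same_nbhd (h n) (h m) -> n = m) /\
     (forall x, card2 (same_nbhd x) -> exists n, same_nbhd x (h n))).

End LoopDefs.

(* Main.v *)
Require Import Defs.
From Stdlib Require Import ZArith Lia Classical ClassicalEpsilon.
Open Scope Z_scope.
Ltac zlia := Z.div_mod_to_equations; lia.

Definition NZ a c := (a | c) \/ (c | a).
Definition sameZ a b := forall c, NZ a c <-> NZ b c.

Lemma NZ_small a c : Z.abs a <= 1 -> NZ a c.
Proof.
  intro H. unfold NZ. assert (a = 0 \/ a = 1 \/ a = -1) as [?|[?|?]] by lia; subst.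
  - right. apply Z.divide_0_r.
  - left. apply Z.divide_1_l.
  - left. apply Z.divide_opp_l. apply Z.divide_1_l.
Qed.

Lemma NZ_abs a b c : Z.abs a = Z.abs b -> NZ a c -> NZ b c.
Proof.
  intros H. unfold NZ. assert (b = a \/ b = - a) as [?|?] by lia; subst; auto.
  rewrite Z.divide_opp_l, Z.divide_opp_r. auto.
Qed.

Lemma NZ_far a : 2 <= Z.abs a -> ~ NZ a (Z.abs a + 1).
Proof.
  intros H. destruct (Z.le_ge_cases 0 a); [rewrite Z.abs_eq in * by lia | rewrite Z.abs_neq in * by lia];
  intros [[k Hk]|[k Hk]];
  (assert (k <= -2 \/ k = -1 \/ k = 0 \/ k = 1 \/ 2 <= k) as Hk' by lia;
   destruct Hk' as [?|[?|[?|[?|?]]]]; try subst k; nia).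
Qed.

Lemma sameZ_div a b : 2 <= Z.abs a -> 2 <= Z.abs b -> (a | b) -> sameZ a b -> Z.abs a = Z.abs b.
Proof.
  intros Ha Hb [k Hk] H. subst b.
  assert (Hk2 : k = 1 \/ k = -1 \/ 2 <= Z.abs k) by nia.
  destruct Hk2 as [?|[?|Hk2]]; [subst; lia | subst; lia |].
  exfalso. set (m := Z.abs k + 1).
  assert (NZ a (m * a)) as H1 by (left; exists m; auto).
  apply H in H1. destruct H1 as [[j Hj]|[j Hj]].
  - assert (m = j * k) by nia. subst m.
    assert (j = 0 \/ j = 1 \/ j = -1 \/ 2 <= Z.abs j) as Hj' by lia.
    destruct Hj' as [?|[?|[?|?]]]; try subst j; nia.
  - assert (k = j * m) by nia. subst m.
    assert (j = 0 \/ 1 <= Z.abs j) as Hj' by lia.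
    destruct Hj' as [?|?]; try subst j; nia.
Qed.

Lemma sameZ_iff a b : sameZ a b <-> (Z.abs a <= 1 /\ Z.abs b <= 1) \/ Z.abs a = Z.abs b.
Proof.
  split.
  - intro H. destruct (Z.le_gt_cases (Z.abs a) 1); destruct (Z.le_gt_cases (Z.abs b) 1).
    + left; auto.
    + exfalso. apply (NZ_far b); [lia|]. apply H. apply NZ_small; auto.
    + exfalso. apply (NZ_far a); [lia|]. apply H. apply NZ_small; auto.
    + right. assert (NZ a b) as [Hd|Hd] by (apply H; left; apply Z.divide_refl).
      * apply sameZ_div; auto; lia.
      * symmetry. apply sameZ_div; auto; try lia. intro c. symmetry. apply H.
  - intros [[Ha Hb]|Hab] c; split; intro; auto using NZ_small.
    + eapply NZ_abs; eauto.
    + eapply NZ_abs; [symmetry|]; eauto.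
Qed.

Section Loop.
Variable G : Type.
Variable mul : G -> G -> G.
Variable e : G.
Hypothesis HL : is_loop G mul e.
Hypothesis HPA : power_assoc G mul e.

Lemma mul_e_l a : mul e a = a. Proof. apply (proj1 HL). Qed.
Lemma mul_e_r a : mul a e = a. Proof. apply (proj1 HL). Qed.

Lemma lcancel a x y : mul a x = mul a y -> x = y.
Proof.
  intro H. destruct (proj1 (proj2 HL) a (mul a x)) as [z [Hz U]].
  rewrite (U x eq_refl). symmetry. apply U. auto.
Qed.

Lemma rcancel a x y : mul x a = mul y a -> x = y.
Proof.
  intro H. destruct (proj2 (proj2 HL) a (mul x a)) as [z [Hz U]].
  rewrite (U x eq_refl). symmetry. apply U. auto.
Qed.

Definition inv (a : G) : G :=
  proj1_sig (constructive_indefinite_description (fun y => mul y a = e)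
    (match proj2 (proj2 HL) a e with ex_intro _ y (conj H _) => ex_intro _ y H end)).

Lemma inv_l a : mul (inv a) a = e.
Proof. unfold inv. destruct constructive_indefinite_description. auto. Qed.

Lemma inv_uniq a y : mul y a = e -> y = inv a.
Proof. intro H. apply (rcancel a). rewrite inv_l. auto. Qed.

Definition Sg x := gen1 G mul e x.

Lemma S_sub x : is_subloop G mul e (Sg x).
Proof.
  unfold Sg, gen1. split; [|split; [|split]].
  - intros T HT _. apply HT.
  - intros a b Ha Hb T HT Hx. apply (proj1 (proj2 HT)); [apply Ha|apply Hb]; auto.
  - intros a b y Ha Hb H T HT Hx. apply (proj1 (proj2 (proj2 HT)) a b); [apply Ha|apply Hb|]; auto.
  - intros a b y Ha Hb H T HT Hx. apply (proj2 (proj2 (proj2 HT)) a b); [apply Ha|apply Hb|]; auto.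
Qed.

Lemma S_x x : Sg x x. Proof. intros T _ H; auto. Qed.
Lemma S_e x : Sg x e. Proof. apply (S_sub x). Qed.
Lemma S_mul x a b : Sg x a -> Sg x b -> Sg x (mul a b).
Proof. apply (S_sub x). Qed.
Lemma S_trans x y z : Sg x y -> Sg y z -> Sg x z.
Proof. intros H1 H2 T HT Hx. apply H2; [auto|apply H1; auto]. Qed.
Lemma S_inv x a : Sg x a -> Sg x (inv a).
Proof. intro H. apply (proj2 (proj2 (proj2 (S_sub x))) a e); auto using S_e, inv_l. Qed.

Lemma assoc x a b c : Sg x a -> Sg x b -> Sg x c -> mul (mul a b) c = mul a (mul b c).
Proof. apply HPA. Qed.

Lemma inv_r x a : Sg x a -> mul a (inv a) = e.
Proof.
  intro H. apply (lcancel (inv a)). rewrite <- (assoc x); auto using S_inv.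
  rewrite inv_l, mul_e_l, mul_e_r. auto.
Qed.

Lemma S_npow x n : Sg x (npow G mul e x n).
Proof. induction n; simpl; auto using S_e, S_mul, S_x. Qed.

Definition zpow x (z : Z) : G :=
  if 0 <=? z then npow G mul e x (Z.to_nat z) else inv (npow G mul e x (Z.to_nat (- z))).

Lemma S_zpow x z : Sg x (zpow x z).
Proof. unfold zpow. destruct (0 <=? z); auto using S_npow, S_inv. Qed.

Lemma zpow_0 x : zpow x 0 = e. Proof. reflexivity. Qed.
Lemma zpow_1 x : zpow x 1 = x. Proof. unfold zpow. simpl. apply mul_e_l. Qed.

Lemma npow_comm x n : mul (npow G mul e x n) x = mul x (npow G mul e x n).
Proof.
  induction n; simpl. rewrite mul_e_l, mul_e_r; auto.
  rewrite <- (assoc x); auto using S_npow, S_x. rewrite <- IHn. auto.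
Qed.

Lemma zpow_succ x z : zpow x (z + 1) = mul (zpow x z) x.
Proof.
  unfold zpow. destruct (Z.leb_spec 0 z).
  - destruct (Z.leb_spec 0 (z+1)); [|lia].
    replace (Z.to_nat (z+1)) with (S (Z.to_nat z)) by lia. reflexivity.
  - destruct (Z.leb_spec 0 (z+1)).
    + assert (z = -1) by lia. subst. simpl. rewrite mul_e_l. symmetry. apply inv_l.
    + replace (Z.to_nat (- z)) with (S (Z.to_nat (- (z+1)))) by lia.
      set (c := npow G mul e x (Z.to_nat (- (z+1)))). simpl. fold c.
      symmetry. apply inv_uniq.
      assert (Sc : Sg x c) by apply S_npow.
      rewrite (assoc x); auto using S_inv, S_mul, S_x, S_npow.
      unfold c. rewrite <- npow_comm. fold c. apply inv_l.
Qed.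

Lemma zpow_pred x z : zpow x (z - 1) = mul (zpow x z) (inv x).
Proof.
  replace z with (z - 1 + 1) at 2 by lia. rewrite zpow_succ.
  rewrite (assoc x); auto using S_inv, S_x, S_zpow. rewrite (inv_r x); auto using S_x.
  rewrite mul_e_r; auto.
Qed.

Lemma zpow_add x a b : zpow x (a + b) = mul (zpow x a) (zpow x b).
Proof.
  induction b using Z.peano_ind.
  - rewrite Z.add_0_r, zpow_0, mul_e_r. auto.
  - rewrite <- !Z.add_1_r, Z.add_assoc, !zpow_succ, IHb.
    apply (assoc x); auto using S_zpow, S_x.
  - rewrite <- !Z.sub_1_r. replace (a + (b - 1)) with (a + b - 1) by lia.
    rewrite !zpow_pred, IHb. apply (assoc x); auto using S_zpow, S_x, S_inv.
Qed.

Lemma zpow_opp x a : zpow x (- a) = inv (zpow x a).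
Proof. apply inv_uniq. rewrite <- zpow_add. replace (-a + a) with 0 by lia. auto. Qed.

Lemma zpow_mul x a b : zpow (zpow x a) b = zpow x (a * b).
Proof.
  induction b using Z.peano_ind.
  - rewrite Z.mul_0_r. auto.
  - rewrite <- !Z.add_1_r, zpow_succ, IHb, <- zpow_add. f_equal. lia.
  - rewrite <- !Z.sub_1_r, zpow_pred, IHb, <- zpow_opp, <- zpow_add. f_equal. lia.
Qed.

Lemma zpow_e k : zpow e k = e.
Proof. rewrite <- (zpow_0 e), zpow_mul. auto. Qed.

Lemma zpow_period x m a q : zpow x m = e -> zpow x (a + m * q) = zpow x a.
Proof. intro H. rewrite zpow_add, <- zpow_mul, H, zpow_e, mul_e_r. auto. Qed.

Lemma zpow_diff x a b : zpow x a = zpow x b -> zpow x (b - a) = e.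
Proof.
  intro H. apply (lcancel (zpow x a)). rewrite <- zpow_add, mul_e_r, H. f_equal. lia.
Qed.


Lemma inv_e : inv e = e.
Proof. symmetry. apply inv_uniq. apply mul_e_l. Qed.

Lemma zpow_rel_iff x n y : zpow_rel G mul e x n y <-> y = zpow x n.
Proof.
  destruct n as [|p|p]; simpl.
  - unfold zpow; simpl; tauto.
  - unfold zpow. simpl. tauto.
  - unfold zpow. simpl. split; intro H.
    + apply inv_uniq; auto.
    + subst. apply inv_l.
Qed.

Definition Pw x y := exists k, y = zpow x k.

Lemma is_power_iff x y : is_power G mul e x y <-> Pw x y.
Proof.
  unfold is_power, Pw. split; intros [k H]; exists k; apply zpow_rel_iff; auto.
Qed.

Definition fin x := exists m, 0 < m /\ zpow x m = e.

Lemma finite_order_iff x : finite_order G mul e x <-> fin x.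
Proof.
  unfold finite_order, fin. split.
  - intros [n [Hn H]]. exists (Z.of_nat n). split; [lia|].
    unfold zpow. destruct (Z.leb_spec 0 (Z.of_nat n)); [|lia]. rewrite Nat2Z.id. auto.
  - intros [m [Hm H]]. exists (Z.to_nat m). split; [lia|].
    unfold zpow in H. destruct (Z.leb_spec 0 m); [|lia]. auto.
Qed.

Lemma fin_of x k : k <> 0 -> zpow x k = e -> fin x.
Proof.
  intros Hk H. destruct (Z.ltb_spec 0 k).
  - exists k; auto.
  - exists (-k). split; [lia|]. rewrite zpow_opp, H, inv_e. auto.
Qed.

Lemma zpow_inj x a b : ~ fin x -> zpow x a = zpow x b -> a = b.
Proof.
  intros Hf H. apply zpow_diff in H. destruct (Z.eq_dec (b - a) 0); [lia|].
  exfalso. apply Hf. eapply fin_of; eauto.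
Qed.

Lemma Pw_refl x : Pw x x. Proof. exists 1. rewrite zpow_1. auto. Qed.
Lemma Pw_e x : Pw x e. Proof. exists 0. auto. Qed.

Lemma Pw_trans x y z : Pw x y -> Pw y z -> Pw x z.
Proof. intros [a Ha] [b Hb]. subst. exists (a * b). apply zpow_mul. Qed.

Lemma cen x : in_center G mul e x -> forall y, Pw x y \/ Pw y x.
Proof.
  intros H y. destruct (classic (y = x)).
  - subst. left. apply Pw_refl.
  - destruct (H y H0) as [_ [H1|H1]]; [left|right]; apply is_power_iff; auto.
Qed.

Lemma all_pow x : in_center G mul e x -> x <> e -> ~ fin x -> forall y, Pw x y.
Proof.
  intros Hc Hne Hf y. destruct (cen x Hc y) as [H|[k Hk]]; auto.
  destruct (classic (Pw x y)) as [H'|Hn]; auto. exfalso.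
  assert (Hfy : ~ fin y).
  { intros [m [Hm Hy]]. apply Hf. apply (fin_of x m); [lia|].
    rewrite Hk, zpow_mul, Z.mul_comm, <- zpow_mul, Hy, zpow_e. auto. }
  assert (k <> 0) by (intro; subst; auto).
  assert (k <> 1) by (intro; subst; apply Hn; exists 1; rewrite zpow_1, zpow_1; auto).
  assert (k <> -1).
  { intro; subst. apply Hn. exists (-1). rewrite zpow_mul, <- zpow_1 at 1. auto. }
  set (s := if 0 <? k then k + 1 else k - 1).
  assert (Hs : (2 <= k /\ s = k + 1) \/ (k <= -2 /\ s = k - 1)).
  { unfold s. destruct (Z.ltb_spec 0 k); lia. }
  destruct (cen x Hc (zpow y s)) as [[m Hm]|[j Hj]].
  - rewrite Hk, zpow_mul in Hm. apply zpow_inj in Hm; auto.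
    assert (m <= -1 \/ m = 0 \/ m = 1 \/ m >= 2) as Hm' by lia.
    destruct Hs as [[? ?]|[? ?]]; destruct Hm' as [?|[?|[?|?]]]; try subst m; nia.
  - rewrite zpow_mul in Hj. rewrite Hk in Hj. apply zpow_inj in Hj; auto.
    assert (j <= -1 \/ j = 0 \/ j = 1 \/ j >= 2) as Hm' by lia.
    destruct Hs as [[? ?]|[? ?]]; destruct Hm' as [?|[?|[?|?]]]; try subst j; nia.
Qed.

Lemma iso_from x : ~ fin x -> (forall y, Pw x y) -> iso_Z G mul.
Proof.
  intros Hf Hall.
  set (f := fun y => proj1_sig (constructive_indefinite_description _ (Hall y))).
  assert (Hfy : forall y, y = zpow x (f y)).
  { intro y. unfold f. destruct constructive_indefinite_description. auto. }
  exists f. split; [|split].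
  - intros a b H. rewrite (Hfy a), (Hfy b), H. auto.
  - intro z. exists (zpow x z). apply (zpow_inj x); auto.
  - intros a b. apply (zpow_inj x); auto. rewrite <- Hfy, zpow_add, <- !Hfy. auto.
Qed.

Lemma part_a x y : in_center G mul e x -> x <> e -> ~ fin y -> iso_Z G mul.
Proof.
  intros Hc Hne Hy.
  assert (Hx : ~ fin x).
  { intros [n [Hn Hxn]]. destruct (cen x Hc y) as [[k Hk]|[k Hk]].
    - apply Hy. exists n. split; auto. rewrite Hk, zpow_mul, Z.mul_comm, <- zpow_mul, Hxn, zpow_e. auto.
    - assert (k <> 0) by (intro; subst; auto).
      apply Hy. apply (fin_of y (k * n)); [nia|]. rewrite <- zpow_mul, <- Hk. auto. }
  apply (iso_from x Hx). apply all_pow; auto.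
Qed.


Lemma cn_iff y w : closed_nbhd G mul e y w <-> Pw y w \/ Pw w y.
Proof.
  unfold closed_nbhd, pg_adj. rewrite !is_power_iff. split.
  - intros [H|[_ H]]; [|auto]. subst. left. apply Pw_refl.
  - intro H. destruct (classic (w = y)); auto.
Qed.

Lemma card2_no3 (P : G -> Prop) a b c : card2 G P -> P a -> P b -> P c ->
  a <> b -> a <> c -> b <> c -> False.
Proof.
  intros [p [q [_ H]]] Ha Hb Hc. apply H in Ha, Hb, Hc.
  destruct Ha, Hb, Hc; subst; tauto.
Qed.

Lemma card3_no4 (P : G -> Prop) a b c d : card3 G P -> P a -> P b -> P c -> P d ->
  a <> b -> a <> c -> a <> d -> b <> c -> b <> d -> c <> d -> False.
Proof.
  intros [p [q [r [_ [_ [_ H]]]]]] Ha Hb Hc Hd. apply H in Ha, Hb, Hc, Hd.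
  destruct Ha as [?|[?|?]], Hb as [?|[?|?]], Hc as [?|[?|?]], Hd as [?|[?|?]]; subst; tauto.
Qed.

Section Iso.
Variable f : G -> Z.
Hypothesis Hinj : forall a b, f a = f b -> a = b.
Hypothesis Hsurj : forall z, exists a, f a = z.
Hypothesis Hhom : forall a b, f (mul a b) = f a + f b.

Definition g z := proj1_sig (constructive_indefinite_description _ (Hsurj z)).
Lemma fg z : f (g z) = z.
Proof. unfold g. destruct constructive_indefinite_description. auto. Qed.

Lemma f_e : f e = 0.
Proof. pose proof (Hhom e e). rewrite mul_e_l in H. lia. Qed.

Lemma f_npow y n : f (npow G mul e y n) = Z.of_nat n * f y.
Proof. induction n; [apply f_e|]. cbn [npow]. rewrite Hhom, IHn, Nat2Z.inj_succ. lia. Qed.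

Lemma f_inv c : f (inv c) = - f c.
Proof. pose proof (Hhom (inv c) c). rewrite inv_l, f_e in H. lia. Qed.

Lemma f_zpow y k : f (zpow y k) = k * f y.
Proof.
  unfold zpow. destruct (Z.leb_spec 0 k).
  - rewrite f_npow. f_equal. lia.
  - rewrite f_inv, f_npow. rewrite Z2Nat.id by lia. lia.
Qed.

Lemma Pw_f y w : Pw y w <-> (f y | f w).
Proof.
  split.
  - intros [k Hk]. subst. exists k. apply f_zpow.
  - intros [k Hk]. exists k. apply Hinj. rewrite f_zpow. auto.
Qed.

Lemma same_f y w : same_nbhd G mul e y w <-> sameZ (f y) (f w).
Proof.
  unfold same_nbhd, sameZ, NZ. split.
  - intros H c. specialize (H (g c)). rewrite !cn_iff, !Pw_f, fg in H. auto.
  - intros H z. rewrite !cn_iff, !Pw_f. auto.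
Qed.

Lemma classE y w : same_nbhd G mul e y w <->
  (Z.abs (f y) <= 1 /\ Z.abs (f w) <= 1) \/ Z.abs (f y) = Z.abs (f w).
Proof. rewrite same_f. apply sameZ_iff. Qed.

Lemma ginj a b : a <> b -> g a <> g b.
Proof. intros H E. apply H. rewrite <- (fg a), <- (fg b), E. auto. Qed.

Lemma fneq a b : f a <> f b -> a <> b.
Proof. intros H E. subst. auto. Qed.

Lemma card3_small x : Z.abs (f x) <= 1 -> card3 G (same_nbhd G mul e x).
Proof.
  intro Hx. exists e, (g 1), (g (-1)).
  split; [apply fneq; rewrite f_e, fg; lia|].
  split; [apply fneq; rewrite f_e, fg; lia|].
  split; [apply ginj; lia|].
  intro y. rewrite classE. split.
  - intro H. assert (f y = 0 \/ f y = 1 \/ f y = -1) as [E|[E|E]] by lia.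
    + left. apply Hinj. rewrite E, f_e. auto.
    + right; left. apply Hinj. rewrite E, fg. auto.
    + right; right. apply Hinj. rewrite E, fg. auto.
  - intros [E|[E|E]]; subst; rewrite ?f_e, ?fg; lia.
Qed.

Lemma card2_big x : 2 <= Z.abs (f x) -> card2 G (same_nbhd G mul e x).
Proof.
  intro Hx. exists x, (g (- f x)). split; [apply fneq; rewrite fg; lia|].
  intro y. rewrite classE. split.
  - intro H. assert (f y = f x \/ f y = - f x) as [E|E] by lia.
    + left. apply Hinj. auto.
    + right. apply Hinj. rewrite fg. auto.
  - intros [E|E]; subst; rewrite ?fg; lia.
Qed.

Lemma class_of_iso : class_structure G mul e.
Proof.
  split; [|split].
  - exists e. split. apply card3_small. rewrite f_e. lia.
    intros d Hd. apply classE. rewrite f_e.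
    destruct (Z.le_gt_cases (Z.abs (f d)) 1); [lia|]. exfalso.
    destruct Hd as [a [b [c [Hab [Hac [Hbc Hd]]]]]].
    assert (Ha : same_nbhd G mul e d a) by (apply Hd; auto).
    assert (Hb : same_nbhd G mul e d b) by (apply Hd; auto).
    assert (Hc : same_nbhd G mul e d c) by (apply Hd; auto).
    rewrite classE in Ha, Hb, Hc.
    assert (f a <> f b) by (intro E; apply Hab; auto).
    assert (f a <> f c) by (intro E; apply Hac; auto).
    assert (f b <> f c) by (intro E; apply Hbc; auto).
    lia.
  - intro x. destruct (Z.le_gt_cases (Z.abs (f x)) 1).
    + right. apply card3_small; auto.
    + left. apply card2_big. lia.
  - exists (fun n => g (Z.of_nat n + 2)). split; [|split].
    + intro n. apply card2_big. rewrite fg. lia.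
    + intros n m H. apply classE in H. rewrite !fg in H. lia.
    + intros x Hx. destruct (Z.le_gt_cases (Z.abs (f x)) 1).
      * exfalso. apply (card2_no3 _ e (g 1) (g (-1)) Hx).
        -- apply classE. rewrite f_e. lia.
        -- apply classE. rewrite fg. lia.
        -- apply classE. rewrite fg. lia.
        -- apply fneq; rewrite f_e, fg; lia.
        -- apply fneq; rewrite f_e, fg; lia.
        -- apply ginj; lia.
      * exists (Z.to_nat (Z.abs (f x) - 2)). apply classE. rewrite fg. lia.
Qed.

End Iso.


Definition ord y m := 0 < m /\ zpow y m = e /\ forall j, 0 < j < m -> zpow y j <> e.

Lemma ord_ex y : fin y -> exists m, ord y m.
Proof.
  intros [m0 [Hm0 H0]]. apply NNPP. intro Hn.
  assert (Hall : forall n : nat, forall j, 0 < j <= Z.of_nat n -> zpow y j <> e).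
  { induction n; intros j Hj.
    - lia.
    - destruct (Z.le_gt_cases j (Z.of_nat n)); [apply IHn; lia|].
      intro E. apply Hn. exists j. split; [lia|split; auto].
      intros i Hi. apply IHn. lia. }
  apply (Hall (Z.to_nat m0) m0); auto. lia.
Qed.

Lemma ord_red y m k : ord y m -> zpow y k = zpow y (k mod m).
Proof.
  intros [Hm [He _]]. rewrite (Z.div_mod k m) at 1 by lia.
  rewrite Z.add_comm. apply zpow_period; auto.
Qed.

Lemma ord_neq2 y m a b : ord y m -> 0 < b - a < m -> zpow y a <> zpow y b.
Proof. intros [_ [_ H]] Hab E. apply zpow_diff in E. apply (H (b - a)); auto. Qed.

Lemma ord_eq y m a b : ord y m -> zpow y a = zpow y b -> a mod m = b mod m.
Proof.
  intros Ho E. rewrite (ord_red y m a), (ord_red y m b) in E by auto.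
  destruct Ho as [Hm [He Hmin]].
  pose proof (Z.mod_pos_bound a m Hm). pose proof (Z.mod_pos_bound b m Hm).
  destruct (Z.lt_total (a mod m) (b mod m)) as [Hl|[Hl|Hl]]; auto; exfalso.
  - apply (ord_neq2 y m (a mod m) (b mod m)); auto. split; auto. lia.
  - apply (ord_neq2 y m (b mod m) (a mod m)); auto. split; auto. lia.
Qed.

Lemma same_refl a : same_nbhd G mul e a a.
Proof. intro; tauto. Qed.
Lemma same_sym a b : same_nbhd G mul e a b -> same_nbhd G mul e b a.
Proof. intros H z. specialize (H z). tauto. Qed.
Lemma same_trans a b c : same_nbhd G mul e a b -> same_nbhd G mul e b c -> same_nbhd G mul e a c.
Proof. intros H1 H2 z. specialize (H1 z). specialize (H2 z). tauto. Qed.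

Lemma same_mut y z : Pw y z -> Pw z y -> same_nbhd G mul e y z.
Proof.
  intros H1 H2 w. rewrite !cn_iff. split; intros [H|H].
  - left. eapply Pw_trans; eauto.
  - right. eapply Pw_trans; eauto.
  - left. eapply Pw_trans; eauto.
  - right. eapply Pw_trans; eauto.
Qed.

Lemma same_pow y m a b u v : zpow y m = e -> (exists q, a * u = b + m * q) ->
  (exists q, b * v = a + m * q) -> same_nbhd G mul e (zpow y a) (zpow y b).
Proof.
  intros He [q1 H1] [q2 H2]. apply same_mut.
  - exists u. rewrite zpow_mul, H1, zpow_period; auto.
  - exists v. rewrite zpow_mul, H2, zpow_period; auto.
Qed.

Lemma central_same c : in_center G mul e c -> same_nbhd G mul e e c.
Proof.
  intros Hc w. rewrite !cn_iff. split; intros _.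
  - apply cen; auto.
  - right. apply Pw_e.
Qed.

Lemma center_of c : (forall w, Pw c w \/ Pw w c) -> in_center G mul e c.
Proof.
  intros H y Hy. split; auto. rewrite !is_power_iff. auto.
Qed.

Lemma pig3 (a b c p q : G) : (a = p \/ a = q) -> (b = p \/ b = q) -> (c = p \/ c = q) ->
  a <> b -> a <> c -> b <> c -> False.
Proof. intros [?|?] [?|?] [?|?]; subst; tauto. Qed.

Section Tors.
Hypothesis CS : class_structure G mul e.

Lemma le3 a b c d : same_nbhd G mul e a b -> same_nbhd G mul e a c -> same_nbhd G mul e a d ->
  a <> b -> a <> c -> a <> d -> b <> c -> b <> d -> c <> d -> False.
Proof.
  intros. destruct (proj1 (proj2 CS) a) as [K2|K3].
  - apply (card2_no3 _ a b c K2); auto. apply same_refl.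
  - apply (card3_no4 _ a b c d K3); auto. apply same_refl.
Qed.

Lemma ge2 a : exists b, b <> a /\ same_nbhd G mul e a b.
Proof.
  destruct (proj1 (proj2 CS) a) as [[p [q [Hpq H]]]|[p [q [r [Hpq [_ [_ H]]]]]]].
  - destruct (classic (p = a)).
    + exists q. split; [congruence|]. apply H; auto.
    + exists p. split; auto. apply H; auto.
  - destruct (classic (p = a)).
    + exists q. split; [congruence|]. apply H; auto.
    + exists p. split; auto. apply H; auto.
Qed.

Lemma ord_bound y m : ord y m -> m = 1 \/ m = 2 \/ m = 3 \/ m = 4 \/ m = 6.
Proof.
  intro Ho. pose proof Ho as [Hm [He _]].
  assert (Hc : m <= 4 \/ m = 6 \/ (exists t, 2 <= t /\ m = 2 * t + 1) \/
     (exists t, 2 <= t /\ m = 4 * t) \/ (exists t, 2 <= t /\ m = 4 * t + 2)).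
  { assert (m <= 4 \/ m = 6 \/ 5 <= m /\ m <> 6) as [?|[?|[? ?]]] by lia; auto.
    right; right. pose proof (Z.div_mod m 4 ltac:(lia)). pose proof (Z.mod_pos_bound m 4 ltac:(lia)).
    assert (m mod 4 = 0 \/ m mod 4 = 1 \/ m mod 4 = 2 \/ m mod 4 = 3) as [E|[E|[E|E]]] by lia.
    - right; left. exists (m / 4). lia.
    - left. exists (2 * (m / 4)). lia.
    - right; right. exists (m / 4). lia.
    - left. exists (2 * (m / 4) + 1). lia. }
  destruct Hc as [?|[?|[[t [Ht E]]|[[t [Ht E]]|[t [Ht E]]]]]]; [lia|lia|exfalso..]; subst m.
  - apply (le3 (zpow y 1) (zpow y 2) (zpow y (-1)) (zpow y (-2))).
    + apply (same_pow y (2*t+1) 1 2 2 (t+1)); auto; [exists 0|exists 1]; ring.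
    + apply (same_pow y (2*t+1) 1 (-1) (-1) (-1)); auto; [exists 0|exists 0]; ring.
    + apply (same_pow y (2*t+1) 1 (-2) (-2) (-(t+1))); auto; [exists 0|exists 1]; ring.
    + apply (ord_neq2 y (2*t+1)); auto; lia.
    + apply not_eq_sym, (ord_neq2 y (2*t+1)); auto; lia.
    + apply not_eq_sym, (ord_neq2 y (2*t+1)); auto; lia.
    + apply not_eq_sym, (ord_neq2 y (2*t+1)); auto; lia.
    + apply not_eq_sym, (ord_neq2 y (2*t+1)); auto; lia.
    + apply not_eq_sym, (ord_neq2 y (2*t+1)); auto; lia.
  - apply (le3 (zpow y 1) (zpow y (-1)) (zpow y (2*t-1)) (zpow y (2*t+1))).
    + apply (same_pow y (4*t) 1 (-1) (-1) (-1)); auto; [exists 0|exists 0]; ring.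
    + apply (same_pow y (4*t) 1 (2*t-1) (2*t-1) (2*t-1)); auto; [exists 0|exists (t-1)]; ring.
    + apply (same_pow y (4*t) 1 (2*t+1) (2*t+1) (2*t+1)); auto; [exists 0|exists (t+1)]; ring.
    + apply not_eq_sym, (ord_neq2 y (4*t)); auto; lia.
    + apply (ord_neq2 y (4*t)); auto; lia.
    + apply (ord_neq2 y (4*t)); auto; lia.
    + apply (ord_neq2 y (4*t)); auto; lia.
    + apply (ord_neq2 y (4*t)); auto; lia.
    + apply (ord_neq2 y (4*t)); auto; lia.
  - apply (le3 (zpow y 2) (zpow y 4) (zpow y (-2)) (zpow y (-4))).
    + apply (same_pow y (4*t+2) 2 4 2 (t+1)); auto; [exists 0|exists 1]; ring.
    + apply (same_pow y (4*t+2) 2 (-2) (-1) (-1)); auto; [exists 0|exists 0]; ring.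
    + apply (same_pow y (4*t+2) 2 (-4) (-2) (-(t+1))); auto; [exists 0|exists 1]; ring.
    + apply (ord_neq2 y (4*t+2)); auto; lia.
    + apply not_eq_sym, (ord_neq2 y (4*t+2)); auto; lia.
    + apply not_eq_sym, (ord_neq2 y (4*t+2)); auto; lia.
    + apply not_eq_sym, (ord_neq2 y (4*t+2)); auto; lia.
    + apply not_eq_sym, (ord_neq2 y (4*t+2)); auto; lia.
    + apply not_eq_sym, (ord_neq2 y (4*t+2)); auto; lia.
Qed.


Lemma Pw_ord y m w : ord y m -> Pw y w -> exists r, 0 <= r < m /\ w = zpow y r.
Proof.
  intros Ho [k Hk]. exists (k mod m). pose proof Ho as [Hm _].
  split; [apply Z.mod_pos_bound; auto|]. rewrite Hk. apply (ord_red y m k Ho).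
Qed.

Lemma Pw_mod y m a b c q : zpow y m = e -> a * c = b + m * q -> Pw (zpow y a) (zpow y b).
Proof. intros He E. exists c. rewrite zpow_mul, E, zpow_period; auto. Qed.

Variable x : G.
Hypothesis Hxc : in_center G mul e x.
Hypothesis Hxe : x <> e.
Hypothesis Hfin : forall y, fin y.

Lemma Hxc1 : in_center G mul e (zpow x 1).
Proof. rewrite zpow_1. auto. Qed.

Lemma case4 : ord x 4 -> False.
Proof.
  intro Ho. pose proof Ho as [_ [He _]].
  assert (Hc2 : in_center G mul e (zpow x 2)).
  { apply center_of. intro w. destruct (cen x Hxc w) as [Hw|Hw].
    - destruct (Pw_ord x 4 w Ho Hw) as [r [Hr E]]. subst w.
      assert (r = 0 \/ r = 1 \/ r = 2 \/ r = 3) as [?|[?|[?|?]]] by lia; subst r.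
      + left. apply Pw_e.
      + right. apply (Pw_mod x 4 1 2 2 0); auto.
      + left. apply Pw_refl.
      + right. apply (Pw_mod x 4 3 2 2 1); auto.
    - right. eapply Pw_trans; [apply Hw|]. exists 2. auto. }
  apply (le3 (zpow x 0) (zpow x 1) (zpow x 2) (zpow x 3)).
  - apply central_same, Hxc1.
  - apply central_same, Hc2.
  - eapply same_trans. apply central_same, Hxc1.
    apply (same_pow x 4 1 3 3 3); auto; [exists 0|exists 2]; ring.
  - apply (ord_neq2 x 4); auto; lia.
  - apply (ord_neq2 x 4); auto; lia.
  - apply (ord_neq2 x 4); auto; lia.
  - apply (ord_neq2 x 4); auto; lia.
  - apply (ord_neq2 x 4); auto; lia.
  - apply (ord_neq2 x 4); auto; lia.
Qed.

Lemma case6 : ord x 6 -> False.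
Proof.
  intro Ho. pose proof Ho as [_ [He _]].
  destruct (ge2 (zpow x 3)) as [z [Hz Hs]].
  assert (N1 : ~ closed_nbhd G mul e (zpow x 3) (zpow x 2)).
  { rewrite cn_iff. intros [[j Hj]|[j Hj]]; rewrite zpow_mul in Hj;
      apply (ord_eq x 6) in Hj; auto; zlia. }
  assert (N2 : closed_nbhd G mul e z (zpow x 2) -> False).
  { intro H. apply N1. apply Hs. auto. }
  destruct (cen x Hxc z) as [Hw|Hw].
  - destruct (Pw_ord x 6 z Ho Hw) as [r [Hr E]]. subst z.
    assert (r = 0 \/ r = 1 \/ r = 2 \/ r = 3 \/ r = 4 \/ r = 5) as [?|[?|[?|[?|[?|?]]]]] by lia; subst r.
    + apply N2. rewrite cn_iff. right. apply Pw_e.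
    + apply N2. rewrite cn_iff. left. apply (Pw_mod x 6 1 2 2 0); auto.
    + assert (H : closed_nbhd G mul e (zpow x 3) (zpow x 3)) by (left; auto).
      apply Hs in H. rewrite cn_iff in H.
      destruct H as [[j Hj]|[j Hj]]; rewrite zpow_mul in Hj; apply (ord_eq x 6) in Hj; auto; zlia.
    + auto.
    + assert (H : closed_nbhd G mul e (zpow x 3) (zpow x 3)) by (left; auto).
      apply Hs in H. rewrite cn_iff in H.
      destruct H as [[j Hj]|[j Hj]]; rewrite zpow_mul in Hj; apply (ord_eq x 6) in Hj; auto; zlia.
    + apply N2. rewrite cn_iff. left. apply (Pw_mod x 6 5 2 4 3); auto.
  - apply N2. rewrite cn_iff. left. eapply Pw_trans; [apply Hw|]. exists 2; auto.
Qed.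

Lemma case3 : ord x 3 -> False.
Proof.
  intro Ho. pose proof Ho as [_ [He Hmin]].
  assert (Kx : forall r, 0 <= r < 3 -> same_nbhd G mul e e (zpow x r)).
  { intros r Hr. assert (r = 0 \/ r = 1 \/ r = 2) as [?|[?|?]] by lia; subst r.
    - apply same_refl.
    - apply central_same, Hxc1.
    - eapply same_trans. apply central_same, Hxc1.
      apply (same_pow x 3 1 2 2 2); auto; [exists 0|exists 1]; ring. }
  destruct CS as [_ [_ [h [Hh _]]]].
  set (q := h O). assert (Hq2 := Hh O). fold q in Hq2.
  assert (Hq : same_nbhd G mul e e q).
  { destruct (classic (Pw x q)) as [Hw|Hn].
    - destruct (Pw_ord x 3 q Ho Hw) as [r [Hr E]]. rewrite E. auto.
    - exfalso. destruct (cen x Hxc q) as [?|[k Hk]]; [auto|].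
      destruct (ord_ex q (Hfin q)) as [m Hom]. pose proof Hom as [Hm [Hqe Hqmin]].
      pose proof (ord_bound q m Hom) as Hb.
      assert (Hkm : x = zpow q (k mod m)) by (rewrite Hk; apply (ord_red q m k Hom)).
      pose proof (Z.mod_pos_bound k m Hm).
      destruct Hb as [?|[?|[?|[?|?]]]]; subst m.
      + apply Hn. assert (Eq : q = e) by (rewrite <- (zpow_1 q), (ord_red q 1 1 Hom); reflexivity).
        rewrite Eq. apply Pw_e.
      + assert (k mod 2 = 0 \/ k mod 2 = 1) as [E|E] by lia; rewrite E in Hkm.
        * auto.
        * apply Hn. rewrite zpow_1 in Hkm. rewrite <- Hkm. apply Pw_refl.
      + assert (k mod 3 = 0 \/ k mod 3 = 1 \/ k mod 3 = 2) as [E|[E|E]] by lia; rewrite E in Hkm.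
        * auto.
        * apply Hn. rewrite zpow_1 in Hkm. rewrite <- Hkm. apply Pw_refl.
        * apply Hn. exists 2. rewrite Hkm, zpow_mul.
          rewrite <- (zpow_1 q) at 1. replace (2*2) with (1 + 3*1) by ring.
          symmetry. apply zpow_period; auto.
      + apply Hxe. rewrite <- (zpow_1 x), (ord_red x 3 1 Ho).
        change (1 mod 3) with (4 mod 3). rewrite <- (ord_red x 3 4 Ho).
        rewrite Hk, zpow_mul. replace (k * 4) with (0 + 4 * k) by ring.
        rewrite zpow_period; auto.
      + set (w := zpow q 3).
        destruct (cen x Hxc w) as [Hw|[j Hj]].
        * destruct (Pw_ord x 3 w Ho Hw) as [r [Hr E]].
          assert (E2 : zpow x (r * 2) = zpow x 0).
          { rewrite <- zpow_mul, <- E. unfold w. rewrite zpow_mul.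
            replace (3 * 2) with (0 + 6 * 1) by ring. rewrite zpow_period; auto. }
          apply (ord_eq x 3) in E2; auto.
          assert (r = 0) by zlia. subst r.
          apply (Hqmin 3); [lia|]. fold w. rewrite E. auto.
        * apply (Hmin 2); [lia|]. rewrite Hj. unfold w. rewrite !zpow_mul.
          replace (3 * (j * 2)) with (0 + 6 * j) by ring. rewrite zpow_period; auto. }
  apply (card2_no3 _ (zpow x 0) (zpow x 1) (zpow x 2) Hq2).
  - apply same_sym. auto.
  - eapply same_trans; [apply same_sym, Hq|]. apply Kx. lia.
  - eapply same_trans; [apply same_sym, Hq|]. apply Kx. lia.
  - apply (ord_neq2 x 3); auto; lia.
  - apply (ord_neq2 x 3); auto; lia.
  - apply (ord_neq2 x 3); auto; lia.
Qed.


Lemma case2 : ord x 2 -> False.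
Proof.
  intro Ho. pose proof Ho as [_ [He Hmin]].
  assert (X3 : zpow x 3 = x).
  { rewrite <- (zpow_1 x) at 2. replace 3 with (1 + 2 * 1) by ring. apply zpow_period; auto. }
  assert (A : forall y, y <> e -> y <> x -> ord y 4 /\ zpow y 2 = x).
  { intros y Hye Hyx. destruct (cen x Hxc y) as [Hw|[k Hk]].
    - exfalso. destruct (Pw_ord x 2 y Ho Hw) as [r [Hr E]].
      assert (r = 0 \/ r = 1) as [?|?] by lia; subst r.
      + auto.
      + rewrite zpow_1 in E. auto.
    - destruct (ord_ex y (Hfin y)) as [m Hom]. pose proof Hom as [Hm [Hye' Hymin]].
      assert (Hkc : forall c, zpow y (k * c) = zpow x c) by (intro c; rewrite Hk, zpow_mul; auto).
      assert (Hkm : x = zpow y (k mod m)) by (rewrite Hk; apply (ord_red y m k Hom)).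
      pose proof (Z.mod_pos_bound k m Hm).
      destruct (ord_bound y m Hom) as [?|[?|[?|[?|?]]]]; subst m.
      + exfalso. apply Hye. rewrite <- (zpow_1 y), (ord_red y 1 1 Hom). reflexivity.
      + exfalso. assert (k mod 2 = 0 \/ k mod 2 = 1) as [E|E] by lia; rewrite E in Hkm.
        * auto.
        * rewrite zpow_1 in Hkm. auto.
      + exfalso. apply Hxe. rewrite <- X3, <- Hkc. replace (k * 3) with (0 + 3 * k) by ring.
        rewrite zpow_period; auto.
      + assert (k mod 4 = 0 \/ k mod 4 = 1 \/ k mod 4 = 2 \/ k mod 4 = 3) as [E|[E|[E|E]]] by lia;
          rewrite E in Hkm.
        * exfalso; auto.
        * exfalso. rewrite zpow_1 in Hkm. auto.
        * auto.
        * exfalso. apply Hyx.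
          assert (E9 : zpow y (1 + 4*2) = zpow y 1) by (apply zpow_period; auto).
          rewrite zpow_1 in E9. rewrite <- E9, <- X3, Hkm, zpow_mul. reflexivity.
      + exfalso. set (w := zpow y 2).
        destruct (cen x Hxc w) as [Hw|[j Hj]].
        * destruct (Pw_ord x 2 w Ho Hw) as [r [Hr E]].
          assert (r = 0 \/ r = 1) as [?|?] by lia; subst r.
          -- apply (Hymin 2); [lia|]. fold w. rewrite E. auto.
          -- rewrite zpow_1 in E. apply Hxe. rewrite <- X3, <- E. unfold w. rewrite zpow_mul.
             replace (2 * 3) with (0 + 6 * 1) by ring. rewrite zpow_period; auto.
        * apply Hxe. rewrite <- X3, Hj. unfold w. rewrite !zpow_mul.
          replace (2 * (j * 3)) with (0 + 6 * j) by ring. rewrite zpow_period; auto. }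
  assert (B : forall c, same_nbhd G mul e e c -> c = e \/ c = x).
  { intros c Hc. destruct (classic (c = e)); auto. destruct (classic (c = x)); auto. exfalso.
    destruct (A c H H0) as [Hoc Hc2].
    apply (le3 (zpow c 0) (zpow c 2) (zpow c 1) (zpow c 3)).
    - rewrite Hc2. apply central_same; auto.
    - rewrite zpow_1. auto.
    - apply (same_trans _ c); [apply Hc|].
      rewrite <- (zpow_1 c) at 1.
      destruct Hoc as [_ [Hc4 _]].
      apply (same_pow c 4 1 3 3 3); auto; [exists 0|exists 2]; ring.
    - apply (ord_neq2 c 4); auto; lia.
    - apply (ord_neq2 c 4); auto; lia.
    - apply (ord_neq2 c 4); auto; lia.
    - apply not_eq_sym, (ord_neq2 c 4); auto; lia.
    - apply (ord_neq2 c 4); auto; lia.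
    - apply (ord_neq2 c 4); auto; lia. }
  assert (Cc : forall a z, a <> e -> a <> x -> same_nbhd G mul e a z -> z = a \/ z = zpow a 3).
  { intros a z Hae Hax Haz.
    assert (Hcn : closed_nbhd G mul e a z) by (apply Haz; left; auto).
    rewrite cn_iff in Hcn.
    assert (Hzex : z <> e /\ z <> x).
    { assert (Hn : ~ same_nbhd G mul e e z).
      { intro H. destruct (B a) as [?|?]; auto. eapply same_trans; [apply H|]. apply same_sym; auto. }
      split; intro E; apply Hn; rewrite E; [apply same_refl|apply central_same; auto]. }
    destruct Hzex as [Hze Hzx].
    destruct (A a Hae Hax) as [Hoa Ha2]. destruct (A z Hze Hzx) as [Hoz Hz2].
    destruct Hcn as [Hw|Hw].
    - destruct (Pw_ord a 4 z Hoa Hw) as [r [Hr E]].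
      assert (r = 0 \/ r = 1 \/ r = 2 \/ r = 3) as [?|[?|[?|?]]] by lia; subst r.
      + exfalso; auto.
      + left. rewrite zpow_1 in E. auto.
      + exfalso. rewrite Ha2 in E. auto.
      + right; auto.
    - destruct (Pw_ord z 4 a Hoz Hw) as [r [Hr E]].
      assert (r = 0 \/ r = 1 \/ r = 2 \/ r = 3) as [?|[?|[?|?]]] by lia; subst r.
      + exfalso; auto.
      + left. rewrite zpow_1 in E. auto.
      + exfalso. rewrite Hz2 in E. auto.
      + right. rewrite E, zpow_mul. rewrite <- (zpow_1 z) at 1.
        replace (3 * 3) with (1 + 4 * 2) by ring. symmetry. apply zpow_period.
        destruct Hoz as [_ [? _]]; auto. }
  destruct CS as [[c0 [[p [q [r [Hpq [Hpr [Hqr Hc0]]]]]] _]] _].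
  assert (Hp : same_nbhd G mul e c0 p) by (apply Hc0; auto).
  assert (Hq : same_nbhd G mul e c0 q) by (apply Hc0; auto).
  assert (Hr : same_nbhd G mul e c0 r) by (apply Hc0; auto).
  assert (Hw : exists w, (w = p \/ w = q \/ w = r) /\ w <> e /\ w <> x).
  { destruct (classic (p = e \/ p = x)) as [Pp|Pp]; [|exists p; split; [auto|tauto]].
    destruct (classic (q = e \/ q = x)) as [Pq|Pq]; [|exists q; split; [auto|tauto]].
    destruct (classic (r = e \/ r = x)) as [Pr|Pr]; [|exists r; split; [auto|tauto]].
    exfalso. apply (pig3 p q r e x); auto. }
  destruct Hw as [w [Hw [Hwe Hwx]]].
  assert (Hcw : same_nbhd G mul e c0 w) by (destruct Hw as [?|[?|?]]; subst; auto).
  apply (pig3 p q r w (zpow w 3)); auto; apply Cc; auto;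
    (eapply same_trans; [apply same_sym, Hcw|]); auto.
Qed.

Lemma tors_false : False.
Proof.
  destruct (ord_ex x (Hfin x)) as [n Hon].
  destruct (ord_bound x n Hon) as [?|[?|[?|[?|?]]]]; subst n.
  - apply Hxe. rewrite <- (zpow_1 x), (ord_red x 1 1 Hon). reflexivity.
  - apply case2; auto.
  - apply case3; auto.
  - apply case4; auto.
  - apply case6; auto.
Qed.

End Tors.
End Loop.
Close Scope Z_scope.

Theorem mainTheorem1 (G : Type) (mul : G -> G -> G) (e : G)
  (HL : is_loop G mul e) (HPA : power_assoc G mul e)
  (HC : exists x1 x2, x1 <> x2 /\ in_center G mul e x1 /\ in_center G mul e x2) :
  (iso_Z G mul \/ forall x, finite_order G mul e x) /\
  (iso_Z G mul <-> class_structure G mul e).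
Proof.
  assert (Hx : exists x, in_center G mul e x /\ x <> e).
  { destruct HC as [x1 [x2 [H12 [H1 H2]]]].
    destruct (classic (x1 = e)); [exists x2; split; auto; congruence | exists x1; auto]. }
  destruct Hx as [x [Hxc Hxe]].
  assert (Dich : iso_Z G mul \/ forall y, fin G mul e HL y).
  { destruct (classic (forall y, fin G mul e HL y)); auto. left.
    apply not_all_ex_not in H. destruct H as [y Hy].
    apply (part_a G mul e HL HPA x y); auto. }
  split; [|split].
  - destruct Dich as [?|H]; auto. right. intro y. apply (proj2 (finite_order_iff G mul e HL y)), H.
  - intros [f [Hinj [Hsurj Hhom]]]. apply (class_of_iso G mul e HL f); auto.
  - intro CS. destruct Dich as [?|H]; auto. exfalso.
    apply (tors_false G mul e HL HPA CS x); auto.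
Qed.
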